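(* Let $\rho$ be a state of $n$ finite-dimensional systems $1,\dots,n$, and let $\Sigma=\{k_1,k_2,\dots\}\subseteq\{1,\dots,n\}$ be nonempty. For each $k\in\Sigma$ let $\mathcal B_k=\{|a^{(k)}_{i}\rangle\}_i$ be an orthonormal basis of system $k$, and for multi-indices $\vec i=(i_{k_1},i_{k_2},\dots)$, $\vec j=(j_{k_1},j_{k_2},\dots)$ let $\rho_{\vec i\vec j}=\big(\langle a^{(k_1)}_{i_{k_1}}|\langle a^{(k_2)}_{i_{k_2}}|\cdots\big)\rho\big(|a^{(k_1)}_{j_{k_1}}\rangle|a^{(k_2)}_{j_{k_2}}\rangle\cdots\big)$, an operator on the systems not in $\Sigma$ (a scalar if $\Sigma=\{1,\dots,n\}$). Then $$Q^\Sigma_{\mathcal N}(\rho)=\min_{\bigotimes_{k\in\Sigma}\mathcal B_k}\frac12\Big(\sum_{\vec i,\vec j}\|\rho_{\vec i\vec j}\|_1-1\Big),$$ the minimum being over all choices of the bases $\mathcal B_k$, $k\in\Sigma$.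
   Context: $\|\cdot\|_1$ is the trace norm. Negativity of a bipartite state $\tau_{X:Y}$: $\mathcal N_{X:Y}(\tau)=(\|\tau^\Gamma\|_1-1)/2$, with $\tau^\Gamma$ the partial transpose with respect to one party. For a system $k$ of dimension $m$ with orthonormal basis $\{|a^{(k)}_i\rangle\}$, the measurement interaction is the isometry $V_k:k\to k\otimes k'$ ($k'$ an $m$-dimensional apparatus with computational basis $\{|i\rangle\}$), $V_k|a^{(k)}_i\rangle=|a^{(k)}_i\rangle|i\rangle$. The pre-measurement state is $\tilde\rho=(\bigotimes_{k\in\Sigma}V_k)\rho(\bigotimes_{k\in\Sigma}V_k)^\dagger$ on the systems $1,\dots,n$ together with the apparatuses $\Sigma'=\{k':k\in\Sigma\}$. The negativity of quantumness on $\Sigma$ is $Q^\Sigma_{\mathcal N}(\rho)=\min\mathcal N_{\{1,\dots,n\}:\Sigma'}(\tilde\rho)$ over all choices of bases of the systems in $\Sigma$. *)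

(* Defs.v *)
From HB Require Import structures.
From mathcomp Require Import all_boot all_order all_algebra.
Unset Printing Implicit Defensive.
Import Order.TTheory GRing.Theory Num.Theory.
Local Open Scope ring_scope.
Local Open Scope sesquilinear_scope.

(* An operator on a finite-dimensional Hilbert space with computational basis
   indexed by the finite type T, given by its matrix entries <x|A|y> = A x y. *)
Definition op (C : numClosedFieldType) (T : finType) := T -> T -> C.

Section Defs.
Context {C : numClosedFieldType}.

Definition tomx {T : finType} (A : op C T) : 'M[C]_#|T| :=
  \matrix_(i, j) A (enum_val i) (enum_val j).

(* Trace norm ||A||_1 = Tr sqrt(A^dagger A) = sum of the square roots of the
   eigenvalues of the positive semidefinite matrix A^dagger A. *)
Definition trnorm {T : finType} (A : op C T) : C :=
  let M := tomx A in
  \sum_(i < #|T|) sqrtC (spectral_diag (M ^t* *m M) 0 i).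

Definition is_state {T : finType} (rho : op C T) : Prop :=
  (forall v : T -> C, 0 <= \sum_x \sum_y (v x)^* * rho x y * v y)
  /\ \sum_x rho x x = 1.

Definition ptrans {X Y : finType} (tau : op C (X * Y)%type) : op C (X * Y)%type :=
  fun a b => tau (a.1, b.2) (b.1, a.2).

Definition negativity {X Y : finType} (tau : op C (X * Y)%type) : C :=
  (trnorm (ptrans tau) - 1) / 2%:R.

Definition sysidx {n : nat} (d : 'I_n -> nat) : finType :=
  {dffun forall k : 'I_n, 'I_(d k)}.

(* Multi-indices on the systems of Sigma (= computational index of the
   apparatuses Sigma'). *)
Definition sigidx {n : nat} (d : 'I_n -> nat) (Sigma : {set 'I_n}) : finType :=
  {dffun forall k : {k : 'I_n | k \in Sigma}, 'I_(d (val k))}.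

Definition compidx {n : nat} (d : 'I_n -> nat) (Sigma : {set 'I_n}) : finType :=
  {dffun forall k : {k : 'I_n | k \notin Sigma}, 'I_(d (val k))}.

(* A choice of bases: for each k, the rows of B k are the basis vectors
   |a^(k)_i>, i.e. <x|a^(k)_i> = B k i x.  Orthonormal bases of the systems
   in Sigma correspond to unitary B k. *)
Definition bases_ok {n : nat} {d : 'I_n -> nat} (Sigma : {set 'I_n})
  (B : forall k : 'I_n, 'M[C]_(d k)) : Prop :=
  forall k, k \in Sigma -> B k \is unitarymx.

(* Matrix of the isometry (tensor_{k in Sigma} V_k) (tensor identity on the
   other systems) from the systems to systems (x) apparatuses:
   entry < x, s | V | y >, where V_k = sum_i |a_i><a_i| (x) |i>_{k'}. *)
Definition meas_iso {n : nat} {d : 'I_n -> nat} (Sigma : {set 'I_n})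
  (B : forall k : 'I_n, 'M[C]_(d k))
  (xs : (sysidx d * sigidx d Sigma)%type) (y : sysidx d) : C :=
  (\prod_(k : {k : 'I_n | k \in Sigma})
      (B (val k) (xs.2 k) (xs.1 (val k)) * (B (val k) (xs.2 k) (y (val k)))^*))
  * (if [forall k : 'I_n, (k \notin Sigma) ==> (xs.1 k == y k)] then 1 else 0).

Definition premeas {n : nat} {d : 'I_n -> nat} (Sigma : {set 'I_n})
  (B : forall k : 'I_n, 'M[C]_(d k)) (rho : op C (sysidx d))
  : op C (sysidx d * sigidx d Sigma)%type :=
  fun a b => \sum_(y : sysidx d) \sum_(y' : sysidx d)
    meas_iso Sigma B a y * rho y y' * (meas_iso Sigma B b y')^*.

Definition rho_block {n : nat} {d : 'I_n -> nat} (Sigma : {set 'I_n})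
  (B : forall k : 'I_n, 'M[C]_(d k)) (rho : op C (sysidx d))
  (i j : sigidx d Sigma) : op C (compidx d Sigma) :=
  fun z z' => \sum_(y : sysidx d) \sum_(y' : sysidx d)
    ((\prod_(k : {k : 'I_n | k \in Sigma}) (B (val k) (i k) (y (val k)))^*)
     * (if [forall k : {k : 'I_n | k \notin Sigma}, y (val k) == z k] then 1 else 0))
    * rho y y'
    * ((\prod_(k : {k : 'I_n | k \in Sigma}) B (val k) (j k) (y' (val k)))
     * (if [forall k : {k : 'I_n | k \notin Sigma}, y' (val k) == z' k] then 1 else 0)).

Definition is_min (P : C -> Prop) (v : C) : Prop :=
  P v /\ (forall w, P w -> v <= w).

(* v = Q^Sigma_N(rho): the minimum over bases of N_{1..n : Sigma'}(rho~). *)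
Definition is_QN {n : nat} {d : 'I_n -> nat} (Sigma : {set 'I_n})
  (rho : op C (sysidx d)) (v : C) : Prop :=
  is_min (fun w => exists B : forall k : 'I_n, 'M[C]_(d k),
            bases_ok Sigma B /\ w = negativity (premeas Sigma B rho)) v.

End Defs.

(* Main.v *)
Require Import Defs.
From HB Require Import structures.
From mathcomp Require Import all_boot all_order all_algebra.
From mathcomp Require Import ring.
Import Order.TTheory GRing.Theory Num.Theory.
Local Open Scope ring_scope.
Local Open Scope sesquilinear_scope.

Lemma char_poly_conj {C : numClosedFieldType} N (P D : 'M[C]_N) : P \in unitmx ->
  char_poly (invmx P *m D *m P) = char_poly D.
Proof.
move=> Pu; rewrite /char_poly /char_poly_mx.
have Pu' : map_mx polyC P \in unitmx by rewrite map_unitmx.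
rewrite !map_mxM map_invmx.
have -> : 'X%:M - invmx (map_mx polyC P) *m map_mx polyC D *m map_mx polyC P
   = invmx (map_mx polyC P) *m ('X%:M - map_mx polyC D) *m map_mx polyC P.
  by rewrite mulmxBr mulmxBl -[in RHS]mulmxA -scalar_mxC mulmxA mulVmx // mul1mx.
rewrite !det_mulmx det_inv mulrC mulrA mulrV ?mul1r // -unitmxE.
Qed.

Lemma char_poly_diag {C : numClosedFieldType} N (d : 'rV[C]_N) :
  char_poly (diag_mx d) = \prod_(x <- [seq d 0 i | i <- enum 'I_N]) ('X - x%:P).
Proof.
rewrite char_poly_trig ?diag_mx_is_trig // big_map big_enum /=.
by apply: eq_bigr => i _; rewrite mxE eqxx mulr1n.
Qed.

Lemma herm_normal {C : numClosedFieldType} {N} {S : 'M[C]_N} : S^t* = S -> S \is normalmx.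
Proof. by move=> hS; apply/normalmxP; rewrite hS. Qed.

Lemma diag_sq {C : numClosedFieldType} N (mu : 'rV[C]_N) :
  diag_mx mu *m diag_mx mu = diag_mx (\row_i (mu 0 i ^+ 2)).
Proof.
apply/matrixP => i j; rewrite mul_diag_mx !mxE.
by case: eqP => [->|_]; rewrite ?mulr1n ?mulr0n ?mulr0 // expr2.
Qed.

Lemma sum_sqrt_tr {C : numClosedFieldType} N (M S : 'M[C]_N) :
  S^t* = S -> (forall w : 'I_N -> C, 0 <= \sum_j \sum_k (w j)^* * S j k * w k) ->
  S *m S = M^t* *m M ->
  \sum_i sqrtC (spectral_diag (M^t* *m M) 0 i) = \tr S.
Proof.
move=> hS pS SS.
set H := M^t* *m M.
have Hn : H \is normalmx by rewrite /H -SS; apply: herm_normal; rewrite trmx_mul map_mxM hS.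
have /orthomx_spectralP HP := Hn.
have /orthomx_spectralP SQ := herm_normal hS.
set Q := spectralmx S in SQ; set mu := spectral_diag S in SQ.
have Qu : Q \is unitarymx by apply: spectral_unitarymx.
have QQ : Q *m Q^t* = 1%:M by apply/unitarymxP.
have Qi : invmx Q = Q^t* by apply: invmx_unitary.
have QU : Q \in unitmx by apply: unitarymx_unit.
have E : Q *m S *m Q^t* = diag_mx mu.
  by rewrite {1}SQ Qi !mulmxA QQ mul1mx -mulmxA QQ mulmx1.
have mu_ge0 : forall i, 0 <= mu 0 i.
  move=> i.
  have -> : mu 0 i = diag_mx mu i i by rewrite mxE eqxx mulr1n.
  rewrite -E mxE (_ : \sum_j _ = \sum_j \sum_k (Q i j)^*^* * S j k * (Q i k)^*); first exact: pS.
  under eq_bigr do rewrite mxE big_distrl /=.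
  rewrite exchange_big /=.
  apply: eq_bigr => j _; apply: eq_bigr => k _.
  by rewrite conjCK !mxE.
have HQ : H = invmx Q *m diag_mx (\row_i (mu 0 i ^+ 2)) *m Q.
  rewrite /H -SS {1 2}SQ -diag_sq.
  by rewrite !mulmxA -[_ *m Q *m invmx Q]mulmxA mulmxV // mulmx1.
have CP : char_poly (diag_mx (spectral_diag H)) = char_poly (diag_mx (\row_i (mu 0 i ^+ 2))).
  rewrite -(@char_poly_conj _ _ _ _ (spectral_unit H)) -HP.
  by rewrite HQ char_poly_conj.
rewrite !char_poly_diag in CP.
have PB := prod_XsubC_eq CP.
rewrite (_ : \sum_i _ = \sum_(x <- [seq spectral_diag H 0 i | i <- enum 'I_N]) sqrtC x); last by rewrite big_map big_enum.
rewrite (perm_big _ PB) big_map big_enum /=.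
under eq_bigr do rewrite mxE sqrCK ?mu_ge0 //.
rewrite SQ mxtrace_mulC mulmxA mulmxV // mul1mx mxtrace_diag.
by apply: eq_bigl.
Qed.


Lemma qf_mx {C : numClosedFieldType} N (A : 'M[C]_N) (w : 'I_N -> C) :
  \sum_j \sum_k (w j)^* * A j k * w k = (((\col_k w k)^t* *m A) *m \col_k w k) 0 0.
Proof.
rewrite exchange_big mxE; apply: eq_bigr => k _ /=; rewrite !mxE big_distrl /=.
by apply: eq_bigr => j _; rewrite !mxE.
Qed.

Definition msqrt {C : numClosedFieldType} {N} (M : 'M[C]_N) : 'M[C]_N :=
  (spectralmx (M^t* *m M))^t* *m diag_mx (\row_i sqrtC (spectral_diag (M^t* *m M) 0 i))
    *m spectralmx (M^t* *m M).

Lemma sqrt_exists {C : numClosedFieldType} N (M : 'M[C]_N) :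
  let S := msqrt M in [/\ S^t* = S,
    (forall w : 'I_N -> C, 0 <= \sum_j \sum_k (w j)^* * S j k * w k) &
    S *m S = M^t* *m M].
Proof.
rewrite /= /msqrt.
set H := M^t* *m M.
have hH : H^t* = H by rewrite /H trmx_mul map_mxM trmxCK.
have /orthomx_spectralP HP := herm_normal hH.
set P := spectralmx H in HP; set sp := spectral_diag H in HP.
have Pu : P \is unitarymx by apply: spectral_unitarymx.
have PP : P *m P^t* = 1%:M by apply/unitarymxP.
have Pi : invmx P = P^t* by apply: invmx_unitary.
have PU : P \in unitmx by apply: unitarymx_unit.
have sp_ge0 : forall i, 0 <= sp 0 i.
  move=> i.
  have E : P *m H *m P^t* = diag_mx sp.
    by rewrite {1}HP Pi !mulmxA PP mul1mx -mulmxA PP mulmx1.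
  have -> : sp 0 i = diag_mx sp i i by rewrite mxE eqxx mulr1n.
  rewrite -E /H (_ : P *m (M^t* *m M) *m P^t* = (M *m P^t*)^t* *m (M *m P^t*)); last first.
    by rewrite trmx_mul map_mxM ?trmxCK !mulmxA.
  rewrite mxE; apply: sumr_ge0 => k _; rewrite !mxE; by rewrite mulrC mul_conjC_ge0.
set r := \row_i sqrtC (sp 0 i).
have rr : forall i, (r 0 i)^* = r 0 i.
  by move=> i; rewrite mxE geC0_conj // sqrtC_ge0.
split.
- rewrite !trmx_mul !map_mxM trmxCK mulmxA; congr (_ *m _ *m _).
  rewrite tr_diag_mx map_diag_mx; congr diag_mx; apply/matrixP => i j.
  by rewrite !mxE /= geC0_conj // sqrtC_ge0.
- move=> w; rewrite qf_mx.
  set v := \col_k w k.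
  rewrite (_ : v^t* *m (P^t* *m diag_mx r *m P) *m v = (P *m v)^t* *m diag_mx r *m (P *m v)); last first.
    by rewrite trmx_mul map_mxM ?trmxCK !mulmxA.
  rewrite mul_mx_diag mxE; apply: sumr_ge0 => l _; rewrite !mxE.
  rewrite -mulrA mulrCA; apply: mulr_ge0; first by rewrite sqrtC_ge0.
  by rewrite mulrC mul_conjC_ge0.
- rewrite !mulmxA -[P^t* *m diag_mx r *m P *m P^t*]mulmxA PP mulmx1 -[P^t* *m diag_mx r *m diag_mx r]mulmxA diag_sq [RHS]HP Pi; congr (_ *m diag_mx _ *m _).
  by apply/matrixP => i j; rewrite !mxE sqrtCK (ord1 i).
Qed.


Definition adjc {C : numClosedFieldType} {T : finType} (A B : op C T) : op C T :=
  fun p q => \sum_r (A r p)^* * B r q.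
Definition compo {C : numClosedFieldType} {T : finType} (A B : op C T) : op C T :=
  fun p q => \sum_r A p r * B r q.
Definition herm {C : numClosedFieldType} {T : finType} (S : op C T) :=
  forall p q, S q p = (S p q)^*.
Definition psd {C : numClosedFieldType} {T : finType} (S : op C T) :=
  forall v : T -> C, 0 <= \sum_x \sum_y (v x)^* * S x y * v y.

Lemma sum_ev {C : numClosedFieldType} {T : finType} (F : T -> C) :
  \sum_(k < #|T|) F (enum_val k) = \sum_x F x.
Proof.
rewrite [RHS](reindex (fun k : 'I_#|T| => enum_val k)) //; apply: onW_bij.
by exists enum_rank; [apply: enum_valK | apply: enum_rankK].
Qed.

Lemma trnorm_sqrt {C : numClosedFieldType} {T : finType} (A S : op C T) :
  herm S -> psd S -> (forall p q, compo S S p q = adjc A A p q) ->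
  trnorm A = \sum_x S x x.
Proof.
move=> hS pS SS; rewrite /trnorm.
rewrite (@sum_sqrt_tr _ _ _ (tomx S)).
- by rewrite /mxtrace -sum_ev; apply: eq_bigr => i _; rewrite mxE.
- by apply/matrixP => i j; rewrite !mxE (hS (enum_val i) (enum_val j)) conjCK.
- move=> w.
  have E : \sum_x \sum_y (w (enum_rank x))^* * S x y * w (enum_rank y)
         = \sum_j \sum_k (w j)^* * tomx S j k * w k.
    rewrite -(sum_ev (fun x => \sum_y (w (enum_rank x))^* * S x y * w (enum_rank y))).
    apply: eq_bigr => j _.
    rewrite -(sum_ev (fun y => (w (enum_rank (enum_val j)))^* * S (enum_val j) y * w (enum_rank y))).
    by apply: eq_bigr => k _; rewrite !enum_valK mxE.
  by rewrite -E; apply: (pS (fun x => w (enum_rank x))).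
- apply/matrixP => i j; rewrite !mxE.
  have := SS (enum_val i) (enum_val j); rewrite /compo /adjc.
  rewrite -(sum_ev (fun r => S (enum_val i) r * S r (enum_val j))).
  rewrite -(sum_ev (fun r => (A r (enum_val i))^* * A r (enum_val j))) => E.
  rewrite (eq_bigr (fun k => S (enum_val i) (enum_val k) * S (enum_val k) (enum_val j))); last by move=> k _; rewrite !mxE.
  rewrite E; apply: eq_bigr => k _; by rewrite !mxE.
Qed.

Definition opsqrt {C : numClosedFieldType} {T : finType} (A : op C T) : op C T :=
  fun x y => msqrt (tomx A) (enum_rank x) (enum_rank y).

Lemma sqrt_op {C : numClosedFieldType} {T : finType} (A : op C T) :
  let S := opsqrt A in [/\ herm S, psd S & forall p q, compo S S p q = adjc A A p q].
Proof.
have [hS pS SS] := @sqrt_exists _ _ (tomx A).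
rewrite /opsqrt; set S := msqrt (tomx A) in hS pS SS *; split.
- move=> p q; have /matrixP/(_ (enum_rank p) (enum_rank q)) := hS.
  by rewrite !mxE => <-; rewrite conjCK.
- move=> v; have := pS (fun k => v (enum_val k)).
  rewrite -(sum_ev (fun x => \sum_y (v x)^* * S (enum_rank x) (enum_rank y) * v y)).
  congr (_ <= _); apply: eq_bigr => j _.
  rewrite -(sum_ev (fun y => (v (enum_val j))^* * S (enum_rank (enum_val j)) (enum_rank y) * v y)).
  by apply: eq_bigr => k _; rewrite !enum_valK.
- move=> p q; have /matrixP/(_ (enum_rank p) (enum_rank q)) := SS => E.
  rewrite /compo /adjc.
  rewrite -(sum_ev (fun r => S (enum_rank p) (enum_rank r) * S (enum_rank r) (enum_rank q))).
  rewrite -(sum_ev (fun r => (A r p)^* * A r q)).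
  transitivity ((S *m S) (enum_rank p) (enum_rank q)).
    by rewrite mxE; apply: eq_bigr => k _; rewrite enum_valK.
  rewrite E mxE; apply: eq_bigr => k _; by rewrite !mxE !enum_rankK.
Qed.


Definition projS {n : nat} {d : 'I_n -> nat} (Sigma : {set 'I_n}) (x : sysidx d) : sigidx d Sigma :=
  finfun (fun k : {k : 'I_n | k \in Sigma} => x (val k)).
Definition projO {n : nat} {d : 'I_n -> nat} (Sigma : {set 'I_n}) (x : sysidx d) : compidx d Sigma :=
  finfun (fun k : {k : 'I_n | k \notin Sigma} => x (val k)).
Definition glue {n : nat} {d : 'I_n -> nat} (Sigma : {set 'I_n})
  (u : sigidx d Sigma) (o : compidx d Sigma) : sysidx d :=
  finfun (fun k : 'I_n =>
    (if k \in Sigma as b return (k \in Sigma = b -> 'I_(d k))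
     then fun h => u (exist _ k h) else fun h => o (exist _ k (negbT h))) (erefl _)).

Lemma dep_if_true (b : bool) (T : Type) (F : b = true -> T) (G : b = false -> T) (h : b = true) :
  (if b as b' return (b = b' -> T) then F else G) (erefl b) = F h.
Proof.
move: F G h; case: b => F G h //.
by rewrite (eq_irrelevance h (erefl _)).
Qed.

Lemma dep_if_false (b : bool) (T : Type) (F : b = true -> T) (G : b = false -> T) (h : b = false) :
  (if b as b' return (b = b' -> T) then F else G) (erefl b) = G h.
Proof.
move: F G h; case: b => F G h //.
by rewrite (eq_irrelevance h (erefl _)).
Qed.

Lemma projS_glue {n : nat} {d : 'I_n -> nat} (Sigma : {set 'I_n}) u o :
  projS Sigma (@glue n d Sigma u o) = u.
Proof.
apply/ffunP => -[k h]; rewrite !ffunE /=.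
by rewrite (@dep_if_true _ _ _ _ h).
Qed.

Lemma projO_glue {n : nat} {d : 'I_n -> nat} (Sigma : {set 'I_n}) u o :
  projO Sigma (@glue n d Sigma u o) = o.
Proof.
apply/ffunP => -[k h]; rewrite !ffunE /=.
rewrite (@dep_if_false _ _ _ _ (negbTE h)).
by rewrite (bool_irrelevance (negbT (negbTE h)) h).
Qed.

Lemma glue_proj {n : nat} {d : 'I_n -> nat} (Sigma : {set 'I_n}) (x : sysidx d) :
  glue Sigma (projS Sigma x) (projO Sigma x) = x.
Proof.
apply/ffunP => k; rewrite !ffunE; have [h|h] := orP (orbN (k \in Sigma)).
  by rewrite (@dep_if_true _ _ _ _ h) ffunE.
by rewrite (@dep_if_false _ _ _ _ (negbTE h)) ffunE.
Qed.

Lemma sum_split {C : numClosedFieldType} {n : nat} {d : 'I_n -> nat} (Sigma : {set 'I_n})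
  (F : sysidx d -> C) :
  \sum_x F x = \sum_u \sum_o F (glue Sigma u o).
Proof.
rewrite pair_big /= (reindex (fun p : sigidx d Sigma * compidx d Sigma => glue Sigma p.1 p.2)) //.
apply: onW_bij; exists (fun x => (projS Sigma x, projO Sigma x)).
- by move=> [u o]; rewrite /= projS_glue projO_glue.
- by move=> x; rewrite /= glue_proj.
Qed.

Lemma sum_dffun {C : numClosedFieldType} (I : finType) (T_ : I -> finType)
  (F : forall i, T_ i -> C) :
  \sum_(f : {dffun forall i : I, T_ i}) \prod_i F i (f i) = \prod_i \sum_(t : T_ i) F i t.
Proof.
rewrite (reindex (@dffun_of_fprod I T_)); last by apply: onW_bij; apply: dffun_of_fprod_bij.
have := @big_fprod C 0 1 *%R +%R I T_ (fun i => [ffun x => F i x]).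
rewrite /= => E.
rewrite (eq_bigr (fun t : fprod T_ => \prod_(i in I) [ffun x => F i x] (t i))); last first.
  by move=> t _; apply: eq_bigr => i _; rewrite !ffunE.
rewrite E -(bigA_distr_big_dep _ (fun i j => untag 0 [ffun x => F i x] j)).
apply: eq_bigr => i _.
rewrite [RHS](eq_bigr (fun t => [ffun x => F i x] t)); last by move=> t _; rewrite ffunE.
rewrite (big_tag (fun i => [ffun x => F i x]) i).
by apply: eq_bigl.
Qed.


Definition av {C : numClosedFieldType} {n : nat} {d : 'I_n -> nat} {Sigma : {set 'I_n}}
  (B : forall k : 'I_n, 'M[C]_(d k)) (s u : sigidx d Sigma) : C :=
  \prod_(k : {k : 'I_n | k \in Sigma}) B (val k) (s k) (u k).

Lemma ortho {C : numClosedFieldType} {n : nat} {d : 'I_n -> nat} {Sigma : {set 'I_n}}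
  (B : forall k : 'I_n, 'M[C]_(d k)) : bases_ok Sigma B ->
  forall s t : sigidx d Sigma, \sum_u (av B s u)^* * av B t u = (s == t)%:R.
Proof.
move=> hB s t.
have U : forall k : {k : 'I_n | k \in Sigma}, forall i j : 'I_(d (val k)),
    \sum_x (B (val k) i x)^* * B (val k) j x = (i == j)%:R.
  move=> [k hk] i j; have /unitarymxP/matrixP/(_ j i) := hB k hk.
  rewrite !mxE => E; rewrite eq_sym -E; apply: eq_bigr => x _; by rewrite !mxE mulrC.
rewrite /av.
rewrite (eq_bigr (fun u : sigidx d Sigma => \prod_k ((B (val k) (s k) (u k))^* * B (val k) (t k) (u k)))); last first.
  by move=> u _; rewrite rmorph_prod -big_split.
rewrite (@sum_dffun _ _ _ (fun k x => (B (val k) (s k) x)^* * B (val k) (t k) x)).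
rewrite (eq_bigr (fun k => (s k == t k)%:R)); last by move=> k _; apply: U.
case: eqP => [->|ne]; first by apply: big1 => k _; rewrite eqxx.
case: (pickP (fun k => s k != t k)) => [k hk | H].
  by rewrite (bigD1 k) //= (negbTE hk) mul0r.
by case: ne; apply/ffunP => k; apply/eqP; have := H k => /= /negbFE.
Qed.

Lemma ind_O {n : nat} {d : 'I_n -> nat} {Sigma : {set 'I_n}} (x y : sysidx d) :
  [forall k : 'I_n, (k \notin Sigma) ==> (x k == y k)] = (projO Sigma x == projO Sigma y).
Proof.
apply/forallP/eqP => [H|E k].
  by apply/ffunP => -[k hk]; rewrite !ffunE; apply/eqP; exact: (implyP (H k) hk).
apply/implyP => hk; have := congr1 (fun f : compidx d Sigma => nat_of_ord (f (exist _ k hk))) E.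
by rewrite !ffunE => /val_inj ->.
Qed.

Lemma ind_O' {n : nat} {d : 'I_n -> nat} {Sigma : {set 'I_n}} (y : sysidx d) (z : compidx d Sigma) :
  [forall k : {k : 'I_n | k \notin Sigma}, y (val k) == z k] = (projO Sigma y == z).
Proof.
apply/forallP/eqP => [H|E k].
  by apply/ffunP => k; rewrite !ffunE; apply/eqP; exact: H.
by rewrite -E ffunE.
Qed.

Lemma meas_iso_eq {C : numClosedFieldType} {n : nat} {d : 'I_n -> nat} {Sigma : {set 'I_n}}
  (B : forall k : 'I_n, 'M[C]_(d k)) x s y :
  meas_iso Sigma B (x, s) y =
  av B s (projS Sigma x) * (av B s (projS Sigma y))^* * (projO Sigma x == projO Sigma y)%:R.
Proof.
rewrite /meas_iso /av ind_O big_split rmorph_prod /=.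
congr (_ * _ * _); last by case: eqP.
  by apply: eq_bigr => k _; rewrite ffunE.
by apply: eq_bigr => k _; rewrite ffunE.
Qed.

Lemma rho_block_eq {C : numClosedFieldType} {n : nat} {d : 'I_n -> nat} {Sigma : {set 'I_n}}
  (B : forall k : 'I_n, 'M[C]_(d k)) rho i j z z' :
  rho_block Sigma B rho i j z z' =
  \sum_y \sum_y' ((av B i (projS Sigma y))^* * (projO Sigma y == z)%:R) * rho y y'
     * (av B j (projS Sigma y') * (projO Sigma y' == z')%:R).
Proof.
rewrite /rho_block; apply: eq_bigr => y _; apply: eq_bigr => y' _.
rewrite !ind_O' /av rmorph_prod.
congr ((_ * _) * _ * (_ * _)); try by case: eqP.
  by apply: eq_bigr => k _; rewrite ffunE.
by apply: eq_bigr => k _; rewrite ffunE.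
Qed.

Lemma Aform {C : numClosedFieldType} {n : nat} {d : 'I_n -> nat} {Sigma : {set 'I_n}}
  (B : forall k : 'I_n, 'M[C]_(d k)) rho x s x' s' :
  ptrans (premeas Sigma B rho) (x, s) (x', s') =
  av B s' (projS Sigma x) * (av B s (projS Sigma x'))^*
   * rho_block Sigma B rho s' s (projO Sigma x) (projO Sigma x').
Proof.
rewrite /ptrans /premeas /= rho_block_eq big_distrr /=.
apply: eq_bigr => y _; rewrite big_distrr /=; apply: eq_bigr => y' _.
rewrite !meas_iso_eq !rmorphM /= conjCK rmorph_nat [projO Sigma y == _]eq_sym.
rewrite [projO Sigma y' == _]eq_sym.
ring.
Qed.


Lemma sum_pair {C : numClosedFieldType} {X Y : finType} (F : X * Y -> C) :
  \sum_p F p = \sum_x \sum_y F (x, y).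
Proof. by rewrite pair_big; apply: eq_bigr => -[]. Qed.

Lemma sum_delta {C : numClosedFieldType} {Y : finType} (a : Y) (G : Y -> C) :
  (forall s, s != a -> G s = 0) -> \sum_s G s = G a.
Proof. by move=> H; rewrite (bigD1 a) //= big1 ?addr0 // => s /H. Qed.

Definition Sbig {C : numClosedFieldType} {n : nat} {d : 'I_n -> nat} (Sigma : {set 'I_n})
  (B : forall k : 'I_n, 'M[C]_(d k)) (rho : op C (sysidx d)) : op C (sysidx d * sigidx d Sigma)%type :=
  fun p q => (p.2 == q.2)%:R * \sum_t av B t (projS Sigma p.1) * (av B t (projS Sigma q.1))^*
     * opsqrt (rho_block Sigma B rho p.2 t) (projO Sigma p.1) (projO Sigma q.1).

Lemma Sbig_herm {C : numClosedFieldType} {n : nat} {d : 'I_n -> nat} (Sigma : {set 'I_n})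
  (B : forall k : 'I_n, 'M[C]_(d k)) (rho : op C (sysidx d)) : herm (Sbig Sigma B rho).
Proof.
move=> [x1 s1] [x2 s2]; rewrite /Sbig /= rmorphM rmorph_nat rmorph_sum eq_sym.
case: eqP => [<-|_]; rewrite ?mul0r // !mul1r; apply: eq_bigr => t _.
have [hT _ _] := sqrt_op (rho_block Sigma B rho s1 t).
rewrite !rmorphM /= (hT (projO Sigma x1)) conjCK; congr (_ * _); exact: mulrC.
Qed.

Lemma Sbig_tr {C : numClosedFieldType} {n : nat} {d : 'I_n -> nat} (Sigma : {set 'I_n})
  (B : forall k : 'I_n, 'M[C]_(d k)) (rho : op C (sysidx d)) : bases_ok Sigma B ->
  \sum_p Sbig Sigma B rho p p = \sum_i \sum_j trnorm (rho_block Sigma B rho i j).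
Proof.
move=> hB; rewrite sum_pair exchange_big /=; apply: eq_bigr => s _.
rewrite /Sbig /= eqxx.
under eq_bigr do rewrite mul1r.
rewrite (sum_split Sigma).
under [LHS]eq_bigr => u _ do under eq_bigr => o _ do rewrite projS_glue projO_glue.
rewrite [LHS]exchange_big /=.
under [LHS]eq_bigr => o _ do rewrite exchange_big /=.
rewrite [LHS]exchange_big /=.
apply: eq_bigr => t _.
have [hT pT cT] := sqrt_op (rho_block Sigma B rho s t).
rewrite (trnorm_sqrt _ _ hT pT cT).
apply: eq_bigr => o _.
rewrite -big_distrl /=.
have := ortho _ hB t t; rewrite eqxx => E.
rewrite (eq_bigr (fun u => (av B t u)^* * av B t u)) ?E ?mul1r // => u _; by rewrite mulrC.
Qed.

Lemma adjcA_eq {C : numClosedFieldType} {n : nat} {d : 'I_n -> nat} (Sigma : {set 'I_n})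
  (B : forall k : 'I_n, 'M[C]_(d k)) (rho : op C (sysidx d)) x1 s1 x2 s2 :
  adjc (ptrans (premeas Sigma B rho)) (ptrans (premeas Sigma B rho)) (x1, s1) (x2, s2) =
  \sum_s \sum_o (\sum_u (av B s1 u)^* * av B s2 u) *
    (av B s (projS Sigma x1) * (av B s (projS Sigma x2))^*
     * (rho_block Sigma B rho s1 s o (projO Sigma x1))^* * rho_block Sigma B rho s2 s o (projO Sigma x2)).
Proof.
rewrite /adjc sum_pair (sum_split Sigma).
under [LHS]eq_bigr => u _ do under eq_bigr => o _ do under eq_bigr => s _ do
  rewrite !Aform projS_glue projO_glue.
rewrite [LHS]exchange_big /=.
under [LHS]eq_bigr => o _ do rewrite exchange_big /=.
rewrite [LHS]exchange_big /=.
apply: eq_bigr => s _; apply: eq_bigr => o _; rewrite big_distrl /=.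
apply: eq_bigr => u _; rewrite !rmorphM /= conjCK; ring.
Qed.

Lemma compoS_eq {C : numClosedFieldType} {n : nat} {d : 'I_n -> nat} (Sigma : {set 'I_n})
  (B : forall k : 'I_n, 'M[C]_(d k)) (rho : op C (sysidx d)) x1 s0 x2 :
  compo (Sbig Sigma B rho) (Sbig Sigma B rho) (x1, s0) (x2, s0) =
  \sum_t \sum_t' \sum_o (\sum_u (av B t u)^* * av B t' u) *
    (av B t (projS Sigma x1) * (av B t' (projS Sigma x2))^*
     * opsqrt (rho_block Sigma B rho s0 t) (projO Sigma x1) o
     * opsqrt (rho_block Sigma B rho s0 t') o (projO Sigma x2)).
Proof.
rewrite /compo sum_pair.
have Hx : forall x, \sum_s Sbig Sigma B rho (x1, s0) (x, s) * Sbig Sigma B rho (x, s) (x2, s0)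
    = Sbig Sigma B rho (x1, s0) (x, s0) * Sbig Sigma B rho (x, s0) (x2, s0).
  move=> x; rewrite (sum_delta s0) // => s ne.
  by rewrite /Sbig /= [s == s0](negbTE ne) eq_sym (negbTE ne) !mul0r.
under [LHS]eq_bigr => x _ do rewrite Hx.
rewrite /Sbig /= eqxx.
under [LHS]eq_bigr => x _ do rewrite !mul1r.
rewrite (sum_split Sigma).
under [LHS]eq_bigr => u _ do under eq_bigr => o _ do
  rewrite projS_glue projO_glue big_distrl /=.
under [LHS]eq_bigr => u _ do under eq_bigr => o _ do under eq_bigr => t _ do
  rewrite big_distrr /=.
under [LHS]eq_bigr => u _ do rewrite exchange_big /=.
under [LHS]eq_bigr => u _ do under eq_bigr => t _ do rewrite exchange_big /=.
rewrite [LHS]exchange_big /=.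
under [LHS]eq_bigr => t _ do rewrite exchange_big /=.
under [LHS]eq_bigr => t _ do under eq_bigr => t' _ do rewrite exchange_big /=.
apply: eq_bigr => t _; apply: eq_bigr => t' _; apply: eq_bigr => o _.
rewrite big_distrl /=; apply: eq_bigr => u _; ring.
Qed.

Lemma Sbig_compo {C : numClosedFieldType} {n : nat} {d : 'I_n -> nat} (Sigma : {set 'I_n})
  (B : forall k : 'I_n, 'M[C]_(d k)) (rho : op C (sysidx d)) : bases_ok Sigma B ->
  forall p q, compo (Sbig Sigma B rho) (Sbig Sigma B rho) p q =
    adjc (ptrans (premeas Sigma B rho)) (ptrans (premeas Sigma B rho)) p q.
Proof.
move=> hB [x1 s1] [x2 s2].
case: (eqVneq s1 s2) => [<- | ne]; last first.
  rewrite adjcA_eq (ortho _ hB) (negbTE ne).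
  rewrite [RHS]big1; last by move=> s _; rewrite big1 // => o _; rewrite mul0r.
  rewrite /compo big1 // => -[x s] _; rewrite /Sbig /=.
  case: eqP => [e1|_]; last by rewrite !mul0r.
  case: eqP => [e2|_]; last by rewrite !mul0r mulr0.
  by move: ne; rewrite e1 e2 eqxx.
rewrite compoS_eq adjcA_eq (ortho _ hB) eqxx.
under [LHS]eq_bigr => t _ do under eq_bigr => t' _ do under eq_bigr => o _ do
  rewrite (ortho _ hB).
apply: eq_bigr => t _.
rewrite (sum_delta t); last first.
  by move=> t' ne; apply: big1 => o _; rewrite eq_sym (negbTE ne) mul0r.
have [_ _ cT] := sqrt_op (rho_block Sigma B rho s1 t).
transitivity (av B t (projS Sigma x1) * (av B t (projS Sigma x2))^*
   * compo (opsqrt (rho_block Sigma B rho s1 t)) (opsqrt (rho_block Sigma B rho s1 t))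
       (projO Sigma x1) (projO Sigma x2)).
  rewrite /compo big_distrr /=; apply: eq_bigr => o _; rewrite eqxx; rewrite (_ : true%:R = 1) // mul1r; ring.
rewrite cT /adjc big_distrr /=; apply: eq_bigr => o _; rewrite (_ : true%:R = 1) // mul1r; ring.
Qed.

Lemma Sbig_psd {C : numClosedFieldType} {n : nat} {d : 'I_n -> nat} (Sigma : {set 'I_n})
  (B : forall k : 'I_n, 'M[C]_(d k)) (rho : op C (sysidx d)) : psd (Sbig Sigma B rho).
Proof.
move=> v.
set T := fun s t => opsqrt (rho_block Sigma B rho s t).
set w := fun s t o => \sum_u (av B t u)^* * v (glue Sigma u o, s).
suff -> : \sum_p \sum_q (v p)^* * Sbig Sigma B rho p q * v q =
   \sum_s \sum_t \sum_o1 \sum_o2 (w s t o1)^* * T s t o1 o2 * w s t o2.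
  apply: sumr_ge0 => s _; apply: sumr_ge0 => t _.
  by have [_ pT _] := sqrt_op (rho_block Sigma B rho s t); apply: pT.
rewrite sum_pair.
under [LHS]eq_bigr => x1 _ do under eq_bigr => s1 _ do rewrite sum_pair.
have Hc : forall x1 s1 x2, \sum_s2 (v (x1, s1))^* * Sbig Sigma B rho (x1, s1) (x2, s2) * v (x2, s2)
  = (v (x1, s1))^* * (\sum_t av B t (projS Sigma x1) * (av B t (projS Sigma x2))^*
       * T s1 t (projO Sigma x1) (projO Sigma x2)) * v (x2, s1).
  move=> x1 s1 x2; rewrite (sum_delta s1); last first.
    by move=> s ne; rewrite /Sbig /= eq_sym (negbTE ne) mul0r mulr0 mul0r.
  by rewrite /Sbig /= eqxx mul1r.
under [LHS]eq_bigr => x1 _ do under eq_bigr => s1 _ do under eq_bigr => x2 _ do rewrite Hc.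
rewrite [LHS]exchange_big /=; apply: eq_bigr => s _.
under [LHS]eq_bigr => x1 _ do under eq_bigr => x2 _ do rewrite big_distrr big_distrl /=.
under [LHS]eq_bigr => x1 _ do rewrite exchange_big /=.
rewrite [LHS]exchange_big /=; apply: eq_bigr => t _.
rewrite (sum_split Sigma).
under [LHS]eq_bigr => u1 _ do under eq_bigr => o1 _ do rewrite (sum_split Sigma).
under [LHS]eq_bigr => u1 _ do under eq_bigr => o1 _ do under eq_bigr => u2 _ do
  under eq_bigr => o2 _ do rewrite !projS_glue !projO_glue.
rewrite /w.
under [RHS]eq_bigr => o1 _ do under eq_bigr => o2 _ do
  rewrite rmorph_sum big_distrl big_distrr /=.
under [RHS]eq_bigr => o1 _ do under eq_bigr => o2 _ do under eq_bigr => u1 _ do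
  rewrite big_distrl /=.
under [RHS]eq_bigr => o1 _ do under eq_bigr => o2 _ do rewrite exchange_big /=.
under [RHS]eq_bigr => o1 _ do rewrite exchange_big /=.
rewrite [RHS]exchange_big /=.
under [RHS]eq_bigr => u1 _ do under eq_bigr => o1 _ do rewrite exchange_big /=.
apply: eq_bigr => u1 _; apply: eq_bigr => o1 _; apply: eq_bigr => u2 _; apply: eq_bigr => o2 _.
rewrite !rmorphM /= conjCK; ring.
Qed.


Lemma neg_eq {C : numClosedFieldType} {n : nat} {d : 'I_n -> nat} (Sigma : {set 'I_n})
  (B : forall k : 'I_n, 'M[C]_(d k)) (rho : op C (sysidx d)) : bases_ok Sigma B ->
  negativity (premeas Sigma B rho) =
  (\sum_(i : sigidx d Sigma) \sum_(j : sigidx d Sigma) trnorm (rho_block Sigma B rho i j) - 1) / 2%:R.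
Proof.
move=> hB; rewrite /negativity.
rewrite (trnorm_sqrt _ (Sbig Sigma B rho) (Sbig_herm Sigma B rho) (Sbig_psd Sigma B rho)
          (Sbig_compo Sigma B rho hB)).
by rewrite (Sbig_tr Sigma B rho hB).
Qed.

Theorem theorem3 (C : numClosedFieldType) (n : nat) (d : 'I_n -> nat)
  (Sigma : {set 'I_n}) (rho : op C (sysidx d)) :
  (forall k, 0 < d k)%N ->
  Sigma != set0 ->
  is_state rho ->
  forall v : C,
    is_QN Sigma rho v <->
    is_min (fun w => exists B : forall k : 'I_n, 'M[C]_(d k),
              bases_ok Sigma B /\
              w = (\sum_(i : sigidx d Sigma) \sum_(j : sigidx d Sigma)
                     trnorm (rho_block Sigma B rho i j) - 1) / 2%:R) v.
Proof.
move=> _ _ _ v; rewrite /is_QN /is_min; split; case=> [[B [hB ->]] H]; split.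
- by exists B; split => //; rewrite neg_eq.
- move=> w [B' [hB' ->]]; apply: H; exists B'; split => //; by rewrite neg_eq.
- by exists B; split => //; rewrite neg_eq.
- move=> w [B' [hB' ->]]; apply: H; exists B'; split => //; by rewrite neg_eq.
Qed.
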